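(* Let $b_1$ and $b_2$ be slowly varying functions satisfying $\lim_{t\to0^+}b_i(t)\in(0,\infty)$ for $i=1,2$. Then the function $b$ defined for $t\in(0,\infty)$ by \[b(t)=\begin{cases} b_2\!\left(\frac1t-1\right) & t<1,\\ 1 & t=1,\\ b_1(t-1) & t>1,\end{cases}\] is also slowly varying and satisfies $b(t)\approx b_2(1/t)$ for $t\in(0,1)$ and $b\approx b_1$ on $(1,\infty)$.
   Context: A measurable function $b:(0,\infty)\to(0,\infty)$ is called slowly varying if for every $\varepsilon>0$ there exist a non-decreasing function $b_\varepsilon$ and a non-increasing function $b_{-\varepsilon}$ on $(0,\infty)$ such that $t^{\varepsilon}b(t)\approx b_\varepsilon(t)$ and $t^{-\varepsilon}b(t)\approx b_{-\varepsilon}(t)$ on $(0,\infty)$, where $f\approx g$ on a set $A$ means $C^{-1}g(t)\le f(t)\le Cg(t)$ for all $t\in A$, for some constant $C\ge1$ independent of $t$. *)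

(* Defs.v *)
(* R : realType, functions R -> R, only their
   values on (0, +oo) matter. *)
From mathcomp Require Import all_boot all_order all_algebra.
From mathcomp Require Import all_classical all_reals all_analysis.
Import Order.TTheory GRing.Theory Num.Theory numFieldNormedType.Exports.
Local Open Scope classical_set_scope.
Local Open Scope ring_scope.

Definition approx_on {R : realType} (A : set R) (f g : R -> R) : Prop :=
  exists C : R, 1 <= C /\
    forall t, A t -> C^-1 * g t <= f t /\ f t <= C * g t.

Definition nondecreasing_on {R : realType} (A : set R) (f : R -> R) : Prop :=
  forall s t, A s -> A t -> s <= t -> f s <= f t.

Definition nonincreasing_on {R : realType} (A : set R) (f : R -> R) : Prop :=
  forall s t, A s -> A t -> s <= t -> f t <= f s.

Definition slowly_varying {R : realType} (b : R -> R) : Prop :=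
  measurable_fun (`]0%R, +oo[ : set R) b /\
  (forall t : R, 0 < t -> 0 < b t) /\
  forall eps : R, 0 < eps ->
    (exists bp : R -> R, nondecreasing_on `]0%R, +oo[ bp /\
        approx_on `]0%R, +oo[ (fun t => powR t eps * b t) bp) /\
    (exists bm : R -> R, nonincreasing_on `]0%R, +oo[ bm /\
        approx_on `]0%R, +oo[ (fun t => powR t (- eps) * b t) bm).

Definition glued_sv {R : realType} (b1 b2 : R -> R) (t : R) : R :=
  if t < 1 then b2 (t^-1 - 1) else if t == 1 then 1 else b1 (t - 1).

(* Main.v *)
Require Import Defs.
From mathcomp Require Import all_boot all_order all_algebra.
From mathcomp Require Import all_classical all_reals all_analysis.
From mathcomp Require Import ring lra measurable_realfun.
Import Order.TTheory GRing.Theory Num.Theory numFieldNormedType.Exports.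
Local Open Scope classical_set_scope.
Local Open Scope ring_scope.
Section S.
Variable R : realType.
Implicit Types f : R -> R.

Definition QI f := exists C : R, 0 < C /\
  forall s t, 0 < s -> s <= t -> f s <= C * f t.
Definition QD f := exists C : R, 0 < C /\
  forall s t, 0 < s -> s <= t -> f t <= C * f s.

Lemma itv0yP (x : R) : (`]0%R, +oo[%classic : set R) x <-> 0 < x.
Proof. by rewrite /= in_itv /= andbT. Qed.

Lemma inv_mul_le {C x y : R} : 0 < C -> C^-1 * x <= y -> x <= C * y.
Proof.
move=> C0 h; have hc : C * C^-1 = 1 by rewrite mulfV // gt_eqF.
have := ler_wpM2l (ltW C0) h; rewrite mulrA hc mul1r //.
Qed.

Lemma mul_le_inv {C x y : R} : 0 < C -> x <= C * y -> C^-1 * x <= y.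
Proof.
move=> C0 h; have hc : C^-1 * C = 1 by rewrite mulVf // gt_eqF.
have Ci : 0 <= C^-1 by rewrite invr_ge0 ltW.
have := ler_wpM2l Ci h.
by rewrite (mulrA C^-1) hc mul1r.
Qed.

Lemma approx_QI f : (exists bp, nondecreasing_on `]0%R, +oo[ bp /\
   approx_on `]0%R, +oo[ f bp) -> QI f.
Proof.
move=> [bp [ndb [C [C1 H]]]]; have C0 : 0 < C by apply: lt_le_trans C1.
exists (C * C); split; first exact: mulr_gt0.
move=> s t s0 st; have t0 : 0 < t by apply: lt_le_trans st.
have [_ h1] := H s (proj2 (itv0yP s) s0).
have [h2 _] := H t (proj2 (itv0yP t) t0).
have h3 := ndb s t (proj2 (itv0yP s) s0) (proj2 (itv0yP t) t0) st.
have h4 := inv_mul_le C0 h2.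
apply: (le_trans h1); rewrite -mulrA; apply: ler_wpM2l; first exact: ltW.
exact: le_trans h3 h4.
Qed.

Lemma approx_QD f : (exists bm, nonincreasing_on `]0%R, +oo[ bm /\
   approx_on `]0%R, +oo[ f bm) -> QD f.
Proof.
move=> [bp [ndb [C [C1 H]]]]; have C0 : 0 < C by apply: lt_le_trans C1.
exists (C * C); split; first exact: mulr_gt0.
move=> s t s0 st; have t0 : 0 < t by apply: lt_le_trans st.
have [h2 _] := H s (proj2 (itv0yP s) s0).
have [_ h1] := H t (proj2 (itv0yP t) t0).
have h3 := ndb s t (proj2 (itv0yP s) s0) (proj2 (itv0yP t) t0) st.
have h4 := inv_mul_le C0 h2.
apply: (le_trans h1); rewrite -mulrA; apply: ler_wpM2l; first exact: ltW.
exact: le_trans h3 h4.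
Qed.

Lemma QI_approx f : (forall t, 0 < t -> 0 < f t) -> QI f ->
  exists bp, nondecreasing_on `]0%R, +oo[ bp /\ approx_on `]0%R, +oo[ f bp.
Proof.
move=> fpos [C [C0 H]].
pose S t := [set y | exists s, [/\ 0 < s, s <= t & y = f s]].
have hs t : 0 < t -> has_sup (S t).
  move=> t0; split; first by exists (f t); exists t.
  exists (C * f t) => y [s [s0 st ->]]; exact: H.
exists (fun t => sup (S t)); split.
  move=> s t /itv0yP s0 /itv0yP t0 st; apply: ge_sup; first by exists (f s); exists s.
  move=> y [u [u0 us ->]]; apply: sup_upper_bound; first exact: hs.
  by exists u; split => //; apply: le_trans st.
exists C; have C1 : 1 <= C.
  have := H 1 1 ltr01 (lexx _); have := fpos 1 ltr01; nra.
split => // t /itv0yP t0.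
have e1 : f t <= sup (S t) by apply: sup_upper_bound; [exact: hs| exists t].
have e2 : sup (S t) <= C * f t.
  by apply: ge_sup; [exists (f t); exists t | move=> y [s [s0 st ->]]; exact: H].
split; first exact: mul_le_inv.
have := fpos t t0; nra.
Qed.

Lemma QD_approx f : (forall t, 0 < t -> 0 < f t) -> QD f ->
  exists bm, nonincreasing_on `]0%R, +oo[ bm /\ approx_on `]0%R, +oo[ f bm.
Proof.
move=> fpos [C [C0 H]].
pose S t := [set y | exists s, [/\ 0 < s, t <= s & y = f s]].
have hs t : 0 < t -> has_sup (S t).
  move=> t0; split; first by exists (f t); exists t.
  exists (C * f t) => y [s [s0 st ->]]; exact: H.
exists (fun t => sup (S t)); split.
  move=> s t /itv0yP s0 /itv0yP t0 st; apply: ge_sup; first by exists (f t); exists t.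
  move=> y [u [u0 us ->]]; apply: sup_upper_bound; first exact: hs.
  by exists u; split => //; apply: le_trans us.
exists C; have C1 : 1 <= C.
  have := H 1 1 ltr01 (lexx _); have := fpos 1 ltr01; nra.
split => // t /itv0yP t0.
have e1 : f t <= sup (S t) by apply: sup_upper_bound; [exact: hs| exists t].
have e2 : sup (S t) <= C * f t.
  by apply: ge_sup; [exists (f t); exists t | move=> y [s [s0 st ->]]; exact: H].
split; first exact: mul_le_inv.
have := fpos t t0; nra.
Qed.

End S.
Arguments QI {R} f.
Arguments QD {R} f.

Section S2.
Variable R : realType.
Implicit Types f b : R -> R.

Lemma near0r (P : R -> Prop) : (\forall t \near 0^'+, P t) ->
  exists d : R, 0 < d /\ forall t, 0 < t -> t < d -> P t.
Proof.
move=> [d /= d0 H]; exists d; split => // t t0 td; apply: H => //=.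
by rewrite sub0r normrN gtr0_norm.
Qed.

Lemma powRV (x r : R) : 0 < x -> powR (x^-1) r = (powR x r)^-1.
Proof.
move=> x0; have : powR (x * x^-1) r = 1 by rewrite mulfV ?gt_eqF // powR1.
rewrite powRM ?ltW ?invr_gt0 // => h.
by rewrite -[RHS]mulr1 -h mulrA mulVf ?mul1r // gt_eqF // powR_gt0.
Qed.

Lemma sv_unpack b : slowly_varying b -> forall eps, 0 < eps ->
  QI (fun t => powR t eps * b t) /\ QD (fun t => powR t (- eps) * b t).
Proof.
move=> [_ [_ H]] eps e0; have [h1 h2] := H eps e0; split.
  exact: (@approx_QI R _ h1). exact: (@approx_QD R _ h2).
Qed.

Lemma sv_pack b : measurable_fun (`]0%R, +oo[ : set R) b ->
  (forall t, 0 < t -> 0 < b t) ->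
  (forall eps, 0 < eps ->
    QI (fun t => powR t eps * b t) /\ QD (fun t => powR t (- eps) * b t)) ->
  slowly_varying b.
Proof.
move=> mb bpos H; split => //; split => // eps e0; have [h1 h2] := H eps e0.
split; [apply: (@QI_approx R) | apply: (@QD_approx R)] => // t t0;
  by apply: mulr_gt0 => //; [apply: powR_gt0 | apply: bpos].
Qed.

Lemma shiftK b (l : R) : slowly_varying b -> 0 < l -> (b x @[x --> 0^'+] --> l) ->
  exists K, 1 <= K /\ forall s, 1 < s -> b (s-1) <= K * b s /\ b s <= K * b (s-1).
Proof.
move=> sb l0 bl.
have bpos := sb.2.1.
have [[C1 [C10 HI]] [C2 [C20 HD]]] := @sv_unpack b sb 1 ltr01.
have hI s t : 0 < s -> s <= t -> s * b s <= C1 * (t * b t).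
  move=> s0 st; have := HI s t s0 st.
  by rewrite (powRr1 (ltW s0)) (powRr1 (ltW (lt_le_trans s0 st))).
have hD s t : 0 < s -> s <= t -> s * b t <= C2 * (t * b s).
  move=> s0 st; have t0 := lt_le_trans s0 st.
  have := HD s t s0 st; rewrite (powR_inv1 (ltW s0)) (powR_inv1 (ltW t0)) => h.
  have := ler_wpM2l (ltW (mulr_gt0 s0 t0)) h.
  have -> : s * t * (t^-1 * b t) = s * b t.
    by field; rewrite gt_eqF.
  have -> // : s * t * (C2 * (s^-1 * b s)) = C2 * (t * b s).
    by field; rewrite gt_eqF.
have [d [d0 hd]] : exists d, 0 < d /\
    forall t, 0 < t -> t < d -> l/2 < b t < 3 * l / 2.
  have l20 : 0 < l / 2 by lra.
  have [d [d0 H]] := near0r _ (proj1 (cvgrPdist_lt _ _) bl (l/2) l20).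
  exists d; split => // t t0 td.
  have := H t t0 td; rewrite ltr_distlC => /andP[h1 h2]; apply/andP; split; lra.
have two0 : (0:R) < 2 by lra.
have b20 := bpos 2 two0.
pose X := 2 * C1 * b 2 / d.
have eX : d * X = 2 * C1 * b 2 by rewrite /X mulrC divfK // gt_eqF.
have X0 : 0 < X by rewrite /X divr_gt0 // mulr_gt0 // mulr_gt0.
pose Y := d * b 2 / (2 * C2).
have eY : 2 * C2 * Y = d * b 2.
  have h2C : 2 * C2 != 0 by rewrite gt_eqF // mulr_gt0.
  by rewrite /Y mulrC divfK.
have Y0 : 0 < Y by rewrite /Y divr_gt0 // mulr_gt0.
pose M := 3 * l / 2 + X.
pose m := Num.min (l/2) Y.
have [m1 m2] : m <= l / 2 /\ m <= Y.
  by have := lexx m; rewrite {2}/m le_min => /andP.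
have m0 : 0 < m by rewrite /m lt_min; apply/andP; split => //; lra.
have bnd u : 0 < u -> u <= 2 -> m <= b u /\ b u <= M.
  move=> u0 u2; have bu0 := bpos u u0; case: (ltP u d) => ud.
    by have /andP[h1 h2] := hd u u0 ud; rewrite /M; split; lra.
  have h1 := hI u 2 u0 u2; have h2 := hD u 2 u0 u2.
  split; rewrite /M; nra.
pose Q := M / m.
have eQ : m * Q = M by rewrite /Q mulrC divfK // gt_eqF.
have Q0 : 0 < Q by rewrite /Q divr_gt0 // /M; lra.
exists (Q + 2 * C1 + 2 * C2 + 1); split; first lra.
move=> s s1; have u0 : 0 < s - 1 by lra.
have s0 : 0 < s by lra.
have bs0 := bpos s s0; have bu0 := bpos (s-1) u0.
case: (leP s 2) => s2.
  have [h1 h2] := bnd (s-1) u0 ltac:(lra).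
  have [h3 h4] := bnd s s0 s2.
  split; nra.
have h1 := hI (s-1) s u0 ltac:(lra).
have h2 := hD (s-1) s u0 ltac:(lra).
have h3 : C1 * (s * b s) <= C1 * (2 * (s-1) * b s).
  apply: ler_wpM2l; first exact: ltW.
  apply: ler_wpM2r; [exact: ltW | lra].
have h4 : C2 * (s * b (s-1)) <= C2 * (2 * (s-1) * b (s-1)).
  apply: ler_wpM2l; first exact: ltW.
  apply: ler_wpM2r; [exact: ltW | lra].
have e1 : b (s-1) <= 2 * C1 * b s by nra.
have e2 : b s <= 2 * C2 * b (s-1) by nra.
have e3 : 0 <= (Q + 2 * C2 + 1) * b s by apply: mulr_ge0; lra.
have e4 : 0 <= (Q + 2 * C1 + 1) * b (s-1) by apply: mulr_ge0; lra.
split; nra.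
Qed.

End S2.

Section S3.
Variable R : realType.
Implicit Types f b : R -> R.

Lemma meas_glued b1 b2 : measurable_fun (`]0%R, +oo[ : set R) b1 ->
  measurable_fun (`]0%R, +oo[ : set R) b2 ->
  measurable_fun (`]0%R, +oo[ : set R) (glued_sv b1 b2).
Proof.
move=> m1 m2.
have E : (`]0%R, +oo[%classic : set R) =
    `]0%R, 1[%classic `|` ([set 1] `|` `]1%R, +oo[%classic).
  apply/seteqP; split => x /=; rewrite !in_itv /= ?andbT.
    move=> x0; have [h|h|h] := ltgtP x 1.
    - by left; apply/andP.
    - by right; right.
    - by right; left.
  move=> [/andP[x0 _]|[->|x1]] //; exact: lt_trans ltr01 x1.
rewrite E; apply/measurable_funU.
- exact: measurable_itv.
- by apply: measurableU; [exact: measurable_set1 | exact: measurable_itv].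
split.
  apply: (eq_measurable_fun (b2 \o (fun t => t^-1 - 1))).
    by move=> x; rewrite in_setE /= in_itv /= => /andP[x0 x1]; rewrite /glued_sv x1.
  apply: (measurable_comp (measurable_itv `]0%R, +oo[) _ m2).
  - move=> _ [x /= hx <-]; move: hx; rewrite !in_itv /= andbT => /andP[x0 x1].
    by rewrite subr_gt0 invf_gt1.
  apply: open_continuous_measurable_fun; first exact: itv_open.
  move=> x; rewrite in_setE /= in_itv /= => /andP[x0 _].
  apply: continuousB; last exact: cst_continuous.
  by apply: inv_continuous; rewrite gt_eqF.
apply/measurable_funU.
- exact: measurable_set1.
- exact: measurable_itv.
split.
  apply: (eq_measurable_fun (cst (1:R) : R -> R)); last exact: measurable_cst.
  by move=> x; rewrite in_setE /= => ->; rewrite /glued_sv ltxx eqxx.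
apply: (eq_measurable_fun (b1 \o (fun t => t - 1))).
  move=> x; rewrite in_setE /= in_itv /= andbT => x1.
  by rewrite /glued_sv ltNge (ltW x1) /= gt_eqF.
apply: (measurable_comp (measurable_itv `]0%R, +oo[) _ m1).
- by move=> _ [x /= hx <-]; move: hx; rewrite !in_itv /= !andbT subr_gt0.
by apply: measurable_funB; [exact: measurable_id | exact: measurable_cst].
Qed.

End S3.

Section S4.
Variable R : realType.
Implicit Types f b : R -> R.

Lemma le_K (K K' x y : R) : 0 <= y -> K <= K' -> x <= K * y -> x <= K' * y.
Proof. by move=> y0 KK h; apply: (le_trans h); apply: ler_wpM2r. Qed.

Lemma QI_equiv f1 f2 (K : R) : 0 < K ->
  (forall t, 0 < t -> f1 t <= K * f2 t /\ f2 t <= K * f1 t) -> QI f2 -> QI f1.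
Proof.
move=> K0 H [C [C0 HC]]; exists (K * C * K); split.
  by rewrite !mulr_gt0.
move=> s t s0 st; have t0 := lt_le_trans s0 st.
have [h1 _] := H s s0; have [_ h2] := H t t0; have h3 := HC s t s0 st.
apply: (le_trans h1); rewrite -!mulrA; apply: ler_wpM2l; first exact: ltW.
apply: (le_trans h3); apply: ler_wpM2l; first exact: ltW.
exact: h2.
Qed.

Lemma QD_equiv f1 f2 (K : R) : 0 < K ->
  (forall t, 0 < t -> f1 t <= K * f2 t /\ f2 t <= K * f1 t) -> QD f2 -> QD f1.
Proof.
move=> K0 H [C [C0 HC]]; exists (K * C * K); split.
  by rewrite !mulr_gt0.
move=> s t s0 st; have t0 := lt_le_trans s0 st.
have [_ h1] := H s s0; have [h2 _] := H t t0; have h3 := HC s t s0 st.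
apply: (le_trans h2); rewrite -!mulrA; apply: ler_wpM2l; first exact: ltW.
apply: (le_trans h3); apply: ler_wpM2l; first exact: ltW.
exact: h1.
Qed.

Lemma powRVN (x e : R) : 0 < x -> powR x^-1 (- e) = powR x e.
Proof. by move=> x0; rewrite powRV // powRN invrK. Qed.

Lemma powRVP (x e : R) : 0 < x -> powR x^-1 e = powR x (- e).
Proof. by move=> x0; rewrite powRV // powRN. Qed.

Definition hglue b1 b2 (t : R) := if t < 1 then b2 t^-1 else b1 t.

Lemma hglue_pos b1 b2 : slowly_varying b1 -> slowly_varying b2 ->
  forall t, 0 < t -> 0 < hglue b1 b2 t.
Proof.
move=> sv1 sv2 t t0; rewrite /hglue; case: ifP => _.
  by apply: sv2.2.1; rewrite invr_gt0.
exact: sv1.2.1.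
Qed.

Lemma QI_h b1 b2 e : slowly_varying b1 -> slowly_varying b2 -> 0 < e ->
  QI (fun t => powR t e * hglue b1 b2 t).
Proof.
move=> sv1 sv2 e0.
have [[A1 [A10 HA1]] [B1 [B10 HB1]]] := @sv_unpack R b1 sv1 e e0.
have [[A2 [A20 HA2]] [B2 [B20 HB2]]] := @sv_unpack R b2 sv2 e e0.
have b110 := sv1.2.1 1 ltr01; have b210 := sv2.2.1 1 ltr01.
pose r := b2 1 / b1 1.
have er : r * b1 1 = b2 1 by rewrite /r divfK // gt_eqF.
have r0 : 0 < r by rewrite /r divr_gt0.
exists (B2 + A1 + B2 * r * A1); split.
  by have := mulr_gt0 (mulr_gt0 B20 r0) A10; lra.
have hp := @hglue_pos b1 b2 sv1 sv2.
move=> s t s0 st; have t0 := lt_le_trans s0 st.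
have X0 : 0 < powR t e * hglue b1 b2 t by apply: mulr_gt0; [exact: powR_gt0 | exact: hp].
have rA0 : 0 <= B2 * r * A1 by have := mulr_gt0 (mulr_gt0 B20 r0) A10; lra.
rewrite /hglue; case: (ltP t 1) => t1.
  have s1 : s < 1 := le_lt_trans st t1.
  rewrite s1.
  have h := HB2 t^-1 s^-1 (ltac:(by rewrite invr_gt0)) (ltac:(by rewrite lef_pV2 ?posrE)).
  rewrite !powRVN // in h.
  apply: le_K h; first by move: X0; rewrite /hglue t1 => /ltW.
  lra.
case: (ltP s 1) => s1.
  have hA := HB2 1 s^-1 ltr01 (ltac:(by rewrite invf_ge1 // ltW)).
  rewrite powRVN // powR1 /= mul1r in hA.
  have hB := HA1 1 t ltr01 t1.
  rewrite powR1 /= mul1r in hB.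
  have hB' := ler_wpM2l (ltW (mulr_gt0 B20 r0)) hB.
  have Y0 : 0 < powR t e * b1 t by apply: mulr_gt0; [exact: powR_gt0 | exact: sv1.2.1].
  have e1 : 0 < B2 * (powR t e * b1 t) by apply: mulr_gt0.
  have e2 : 0 < A1 * (powR t e * b1 t) by apply: mulr_gt0.
  have e3 : B2 * b2 1 = B2 * r * b1 1 by rewrite -er mulrA.
  nra.
apply: le_K (HA1 s t s0 st).
  by apply: ltW; apply: mulr_gt0; [exact: powR_gt0 | exact: sv1.2.1].
have := mulr_gt0 (mulr_gt0 B20 r0) A10; lra.
Qed.

Lemma QD_h b1 b2 e : slowly_varying b1 -> slowly_varying b2 -> 0 < e ->
  QD (fun t => powR t (- e) * hglue b1 b2 t).
Proof.
move=> sv1 sv2 e0.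
have [[A1 [A10 HA1]] [B1 [B10 HB1]]] := @sv_unpack R b1 sv1 e e0.
have [[A2 [A20 HA2]] [B2 [B20 HB2]]] := @sv_unpack R b2 sv2 e e0.
have b110 := sv1.2.1 1 ltr01; have b210 := sv2.2.1 1 ltr01.
pose r := b1 1 / b2 1.
have er : r * b2 1 = b1 1 by rewrite /r divfK // gt_eqF.
have r0 : 0 < r by rewrite /r divr_gt0.
exists (A2 + B1 + B1 * r * A2); split.
  by have := mulr_gt0 (mulr_gt0 B10 r0) A20; lra.
have hp := @hglue_pos b1 b2 sv1 sv2.
move=> s t s0 st; have t0 := lt_le_trans s0 st.
have X0 : 0 < powR s (- e) * hglue b1 b2 s by apply: mulr_gt0; [exact: powR_gt0 | exact: hp].
rewrite /hglue; case: (ltP t 1) => t1.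
  have s1 : s < 1 := le_lt_trans st t1.
  rewrite s1.
  have h := HA2 t^-1 s^-1 (ltac:(by rewrite invr_gt0)) (ltac:(by rewrite lef_pV2 ?posrE)).
  rewrite !powRVP // in h.
  apply: le_K h; first by move: X0; rewrite /hglue s1 => /ltW.
  have := mulr_gt0 (mulr_gt0 B10 r0) A20; lra.
case: (ltP s 1) => s1.
  have hA := HA2 1 s^-1 ltr01 (ltac:(by rewrite invf_ge1 // ltW)).
  rewrite powRVP // powR1 /= mul1r in hA.
  have hB := HB1 1 t ltr01 t1.
  rewrite powR1 /= mul1r in hB.
  have hA' := ler_wpM2l (ltW (mulr_gt0 B10 r0)) hA.
  have Y0 : 0 < powR s (- e) * b2 s^-1.
    by apply: mulr_gt0; [exact: powR_gt0 | apply: sv2.2.1; rewrite invr_gt0].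
  have e1 : 0 < B1 * (powR s (- e) * b2 s^-1) by apply: mulr_gt0.
  have e2 : 0 < A2 * (powR s (- e) * b2 s^-1) by apply: mulr_gt0.
  have e3 : B1 * b1 1 = B1 * r * b2 1 by rewrite -er mulrA.
  nra.
apply: le_K (HB1 s t s0 st).
  by apply: ltW; apply: mulr_gt0; [exact: powR_gt0 | exact: sv1.2.1].
have := mulr_gt0 (mulr_gt0 B10 r0) A20; lra.
Qed.

End S4.

Theorem lemma3p6 (R : realType) (b1 b2 : R -> R) (l1 l2 : R) :
  slowly_varying b1 -> slowly_varying b2 ->
  0 < l1 -> (b1 x @[x --> 0^'+] --> l1) ->
  0 < l2 -> (b2 x @[x --> 0^'+] --> l2) ->
  slowly_varying (glued_sv b1 b2) /\
  approx_on (`]0%R, 1[ : set R) (glued_sv b1 b2) (fun t => b2 t^-1) /\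
  approx_on (`]1%R, +oo[ : set R) (glued_sv b1 b2) b1.
Proof.
move=> sv1 sv2 l10 c1 l20 c2.
have [K1 [K11 HK1]] := @shiftK R b1 l1 sv1 l10 c1.
have [K2 [K21 HK2]] := @shiftK R b2 l2 sv2 l20 c2.
have K10 : 0 < K1 by lra.
have K20 : 0 < K2 by lra.
have p1 := sv1.2.1; have p2 := sv2.2.1.
have gpos : forall t, 0 < t -> 0 < glued_sv b1 b2 t.
  move=> t t0; rewrite /glued_sv; case: ifPn => t1.
    by apply: p2; rewrite subr_gt0 invf_gt1.
  case: ifPn => // t1'; apply: p1; rewrite subr_gt0.
  by rewrite lt_neqAle eq_sym t1' leNgt.
pose Kg := K1 + K2 + b1 1 + (b1 1)^-1.
have b110 := p1 1 ltr01.
have ib0 : 0 < (b1 1)^-1 by rewrite invr_gt0.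
have Kg0 : 0 < Kg by rewrite /Kg; lra.
have hgh : forall t, 0 < t ->
    glued_sv b1 b2 t <= Kg * @hglue R b1 b2 t /\ @hglue R b1 b2 t <= Kg * glued_sv b1 b2 t.
  move=> t t0; rewrite /glued_sv /hglue; case: (ltP t 1) => t1.
    have := HK2 t^-1; rewrite invf_gt1 // => /(_ t1) [h1 h2].
    have q1 := p2 t^-1 (ltac:(by rewrite invr_gt0)).
    have q2 := p2 (t^-1 - 1) (ltac:(by rewrite subr_gt0 invf_gt1)).
    split; (apply: le_K; last by eassumption); rewrite /Kg ?ltW //; lra.
  case: (eqVneq t 1) => [->|tn1].
    have e : (b1 1)^-1 * b1 1 = 1 by rewrite mulVf // gt_eqF.
    rewrite /Kg /= ?eqxx. split; nra.
  have t1' : 1 < t by rewrite lt_neqAle eq_sym tn1.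
  have [h1 h2] := HK1 t t1'.
  have q1 := p1 t t0; have q2 := p1 (t - 1) (ltac:(by rewrite subr_gt0)).
  split; (apply: le_K; last by eassumption); rewrite /Kg ?ltW //; lra.
split; last split.
- apply: sv_pack.
  + by apply: meas_glued; [exact: sv1.1 | exact: sv2.1].
  + exact: gpos.
  move=> eps e0; split.
    apply: (@QI_equiv R _ (fun t => powR t eps * @hglue R b1 b2 t) Kg Kg0); last exact: (@QI_h R b1 b2 eps sv1 sv2 e0).
    move=> t t0; have [h1 h2] := hgh t t0; have pe := powR_gt0 eps t0.
    split; rewrite mulrCA; apply: ler_wpM2l => //; exact: ltW.
  apply: (@QD_equiv R _ (fun t => powR t (- eps) * @hglue R b1 b2 t) Kg Kg0); last exact: (@QD_h R b1 b2 eps sv1 sv2 e0).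
  move=> t t0; have [h1 h2] := hgh t t0; have pe := powR_gt0 (- eps) t0.
  split; rewrite mulrCA; apply: ler_wpM2l => //; exact: ltW.
- exists K2; split => // t; rewrite /= in_itv /= => /andP[t0 t1].
  have := HK2 t^-1; rewrite invf_gt1 // => /(_ t1) [h1 h2].
  rewrite /glued_sv t1; split => //.
  exact: mul_le_inv.
- exists K1; split => // t; rewrite /= in_itv /= andbT => t1.
  have [h1 h2] := HK1 t t1.
  rewrite /glued_sv ltNge (ltW t1) /= gt_eqF //; split => //.
  exact: mul_le_inv.
Qed.
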